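(* Let $k$ be a field and $K$ a field extension of $k$, with algebraic closure $\overline K$. Let $G(x)\in K[x]$ be a polynomial having a non-zero root in $\overline K$ which is algebraic over $k$. Then there exist a polynomial $g(x)\in k[x]$ with $g(0)\neq0$, a polynomial $H(x)\in K[x]$, and a non-zero polynomial $I(x)\in K[x]$ with $\deg(I)<\deg(G)$, all of whose roots in $\overline K$ are zero or transcendental over $k$, such that $I(x)g(x)=H(x)G(x)$ in $K[x]$. *)

(* Defs.v *)
From HB Require Import structures.
From mathcomp Require Import all_boot all_order all_algebra.
Set Implicit Arguments. Unset Strict Implicit. Unset Printing Implicit Defensive.
Import GRing.Theory.
Local Open Scope ring_scope.

Definition algebraic_via (F L : fieldType) (f : F -> L) (z : L) : Prop :=
  exists p : {poly F}, p != 0 /\ root (map_poly f p) z.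

Definition algebraic_ext (F L : fieldType) (f : F -> L) : Prop :=
  forall z : L, algebraic_via f z.

(* Main.v *)
Require Import Defs.
From HB Require Import structures.
From mathcomp Require Import all_boot all_order all_algebra.
From Stdlib Require Import Classical.
Import GRing.Theory.
Local Open Scope ring_scope.

Lemma strip_X {F : fieldType} (p : {poly F}) : p != 0 ->
  exists (n : nat) (q : {poly F}), p = q * 'X^n /\ q.[0] != 0.
Proof.
have [m lepm] := ubnP (size p); elim: m => // m IH in p lepm *.
move=> p0; have [h0|h0] := eqVneq p.[0] 0; last by exists 0%N, p; rewrite expr0 mulr1.
have : root p 0 by rewrite rootE h0.
rewrite root_factor_theorem subr0 => /divpK Ep.
have q0 : p %/ 'X != 0 by apply: contraNneq p0 => e; rewrite -Ep e mul0r.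
have lt : (size (p %/ 'X)%R < m)%N.
  rewrite size_divp ?polyX_eq0 // size_polyX /=.
  move: lepm; have := p0; rewrite -size_poly_eq0; case: (size p) => [|s] //= _.
  by rewrite subn1 /= ltnS.
have [n [q [Eq Hq]]] := IH _ lt q0.
exists n.+1, q; split=> //; by rewrite -{1}Ep Eq -mulrA exprSr.
Qed.

Section S.
Variables (k K : fieldType) (Kbar : closedFieldType)
    (iota : {rmorphism k -> K}) (phi : {rmorphism K -> Kbar}).

Lemma step (G : {poly K}) (a : Kbar) : G != 0 -> a != 0 ->
  root (map_poly phi G) a -> algebraic_via (phi \o iota) a ->
  exists (p : {poly k}) (G1 Q : {poly K}),
    [/\ p.[0] != 0, G1 != 0, (size G1 < size G)%N & G1 * map_poly iota p = Q * G].
Proof.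
move=> G0 a0 rG [p0 [p00 rp0]].
have [n [p [Ep p0n]]] := strip_X _ p00.
have rp : root (map_poly phi (map_poly iota p)) a.
  move: rp0; rewrite Ep map_poly_comp !rmorphM /= rootM => /orP[//|].
  by rewrite !rmorphXn /= !map_polyX rootE hornerXn expf_eq0 (negPf a0) andbF.
set P := map_poly iota p.
set D := gcdp G P.
have rD : root (map_poly phi D) a by rewrite /D gcdp_map root_gcd rG rp.
have D0 : D != 0 by rewrite gcdp_eq0 negb_and G0.
have sD : (1 < size D)%N.
  rewrite -(size_map_poly phi); case: ltnP => // h.
  have [c Ec] : exists c, map_poly phi D = c%:P.
    by exists (map_poly phi D)`_0; apply: size1_polyC.
  move: rD; rewrite Ec rootC => /eqP c0.
  by move: D0; rewrite -(map_poly_eq0 phi) Ec c0 eqxx.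
have EG := divpK (dvdp_gcdl G P).
have EP := divpK (dvdp_gcdr G P).
exists p, (G %/ D), (P %/ D); split=> //.
- by apply: contraNneq G0 => e; rewrite -EG -/D e mul0r.
- rewrite size_divp //.
  have : size G != 0%N by rewrite size_poly_eq0.
  move: sD; case: (size D) => // [[|d]] // _; case: (size G) => // s _.
  by rewrite /= subSS ltnS leq_subr.
  by rewrite -/P -/D in EG EP *; rewrite -[in LHS]EP -[in RHS]EG mulrCA.
Qed.

Lemma claim (G : {poly K}) : G != 0 ->
  exists (g : {poly k}) (H I : {poly K}),
    [/\ g.[0] != 0, I != 0, (size I <= size G)%N,
        (forall z : Kbar, root (map_poly phi I) z ->
            z = 0 \/ ~ algebraic_via (phi \o iota) z)
      & I * map_poly iota g = H * G].
Proof.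
have [m lepm] := ubnP (size G); elim: m => // m IH in G lepm *.
move=> G0.
case: (classic (exists a : Kbar, [/\ a != 0, root (map_poly phi G) a
                                 & algebraic_via (phi \o iota) a])).
  move=> [a [a0 ra ala]].
  have [p [G1 [Q [p0 G10 sG1 E]]]] := step _ _ G0 a0 ra ala.
  have [|g [H [I [g0 I0 sI rI E']]]] := IH G1 _ G10.
    by apply: leq_trans sG1 _; rewrite -ltnS.
  exists (g * p), (H * Q), I; split=> //.
  - by rewrite hornerM mulf_neq0.
  - by apply: leq_trans sI (ltnW sG1).
  - by rewrite rmorphM /= mulrA E' -mulrA E mulrA.
move=> nex; exists 1, 1, G; split=> //.
- by rewrite hornerC oner_neq0.
- move=> z rz; have [->|z0] := eqVneq z 0; first by left.
  by right=> al; apply: nex; exists z.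
- by rewrite rmorph1 mulr1 mul1r.
Qed.

End S.

Theorem lemma2p2 (k K : fieldType) (Kbar : closedFieldType)
    (iota : {rmorphism k -> K}) (phi : {rmorphism K -> Kbar})
    (hKbar : algebraic_ext phi)
    (G : {poly K}) (hG0 : G != 0)
    (hroot : exists a : Kbar, [/\ a != 0, root (map_poly phi G) a
                                 & algebraic_via (phi \o iota) a]) :
  exists (g : {poly k}) (H I : {poly K}),
    [/\ g.[0] != 0, I != 0, (size I < size G)%N,
        (forall z : Kbar, root (map_poly phi I) z ->
            z = 0 \/ ~ algebraic_via (phi \o iota) z)
      & I * map_poly iota g = H * G].
Proof.
have [a [a0 ra ala]] := hroot.
have [p [G1 [Q [p0 G10 sG1 E]]]] := @step k K Kbar iota phi _ _ hG0 a0 ra ala.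
have [g [H [I [g0 I0 sI rI E']]]] := @claim k K Kbar iota phi _ G10.
exists (g * p), (H * Q), I; split=> //.
- by rewrite hornerM mulf_neq0.
- by apply: leq_ltn_trans sI sG1.
- by rewrite rmorphM /= mulrA E' -mulrA E mulrA.
Qed.
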